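(* Let $\alpha\ge0$, $\mu\ge0$. There is a positive constant $M$ such that for all $g\in C_B[0,\infty)$, $n\in\mathbb{N}$ and $x\in[0,\infty)$, $$|T_n(g;x)-g(x)|\le M\,\omega_2\!\left(g;\frac12\sqrt{\frac{1}{n^2}x\left(8x^3\alpha^2+4x\alpha+n\right)+\frac{2\mu x}{n}\frac{e_\mu(-nx)}{e_\mu(nx)}}\right)+\omega\!\left(g;\frac{2\alpha x^2}{n}\right).$$
   Context: $C_B[0,\infty)$ denotes the space of uniformly continuous bounded functions on $[0,\infty)$ with sup norm. $\omega(g;\delta)=\sup\{|g(s)-g(t)|: s,t\ge0,\ |s-t|\le\delta\}$ and $\omega_2(f;\delta)=\sup_{0<s\le\delta}\|f(\cdot+2s)-2f(\cdot+s)+f(\cdot)\|_{C_B[0,\infty)}$. For $\mu>-\tfrac12$ define $\gamma_\mu(2k)=\dfrac{2^{2k}k!\,\Gamma(k+\mu+1/2)}{\Gamma(\mu+1/2)}$ and $\gamma_\mu(2k+1)=\dfrac{2^{2k+1}k!\,\Gamma(k+\mu+3/2)}{\Gamma(\mu+1/2)}$, $k\ge0$; $e_\mu(x)=\sum_{k\ge0} x^k/\gamma_\mu(k)$; $\theta_k=0$ if $k$ is even and $\theta_k=1$ if $k$ is odd. Let $h_k^\mu(\xi,\alpha)=\gamma_\mu(k)\sum_{j=0}^{\lfloor k/2\rfloor}\dfrac{\alpha^j\xi^{k-2j}}{j!\,\gamma_\mu(k-2j)}$. For $\alpha\ge0,\mu\ge0$, $n\in\mathbb{N}$ and $x\in[0,\infty)$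 define $$T_n(f;x)=\frac{1}{e^{\alpha x^2}e_\mu(nx)}\sum_{k=0}^\infty \frac{h_k^\mu(n,\alpha)}{\gamma_\mu(k)}x^k f\!\left(\frac{k+2\mu\theta_k}{n}\right).$$ *)

(* Defs.v *)
From Stdlib Require Import Reals Lra.
From Coquelicot Require Import Coquelicot.
Open Scope R_scope.

Definition Gamma (a : R) : R :=
  RInt_gen (fun t => Rpower t (a - 1) * exp (- t)) (at_right 0) (Rbar_locally p_infty).

Definition gamma_mu (mu : R) (k : nat) : R :=
  let m := Nat.div2 k in
  if Nat.even k then
    2 ^ (2 * m) * INR (Factorial.fact m) * Gamma (INR m + mu + /2) / Gamma (mu + /2)
  else
    2 ^ (2 * m + 1) * INR (Factorial.fact m) * Gamma (INR m + mu + 3/2) / Gamma (mu + /2).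

Definition e_mu (mu x : R) : R := Series (fun k => x ^ k / gamma_mu mu k).

Definition theta (k : nat) : R := if Nat.even k then 0 else 1.

Definition h_mu (mu : R) (k : nat) (xi alpha : R) : R :=
  gamma_mu mu k *
  sum_f_R0 (fun j => alpha ^ j * xi ^ (k - 2 * j)
                      / (INR (Factorial.fact j) * gamma_mu mu (k - 2 * j))) (Nat.div2 k).

Definition T_op (alpha mu : R) (n : nat) (f : R -> R) (x : R) : R :=
  / (exp (alpha * x ^ 2) * e_mu mu (INR n * x)) *
  Series (fun k => h_mu mu k (INR n) alpha / gamma_mu mu k * x ^ k
                   * f ((INR k + 2 * mu * theta k) / INR n)).

Definition CB (g : R -> R) : Prop :=
  (exists B, forall t, 0 <= t -> Rabs (g t) <= B) /\
  (forall eps, 0 < eps -> exists delta, 0 < delta /\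
     forall s t, 0 <= s -> 0 <= t -> Rabs (s - t) < delta -> Rabs (g s - g t) < eps).

(* modulus of continuity (finite for g in CB) *)
Definition omega (g : R -> R) (delta : R) : R :=
  real (Lub_Rbar (fun v => exists s t, 0 <= s /\ 0 <= t /\ Rabs (s - t) <= delta /\
                                        v = Rabs (g s - g t))).

(* second order modulus of smoothness (finite for g in CB) *)
Definition omega2 (f : R -> R) (delta : R) : R :=
  real (Lub_Rbar (fun v => exists s, 0 < s /\ s <= delta /\
     v = real (Lub_Rbar (fun w => exists y, 0 <= y /\
            w = Rabs (f (y + 2 * s) - 2 * f (y + s) + f y))))).

(* Main.v *)
Require Import Defs.
From Stdlib Require Import Reals Lra Lia Arith Classical.
From Coquelicot Require Import Coquelicot.
Open Scope R_scope.

Lemma exp_le' x y : x <= y -> exp x <= exp y.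
Proof. intros [H|H]; [left; apply exp_increasing; auto| subst; lra]. Qed.

Lemma ln_le_sqrt t : 1 <= t -> 0 <= ln t <= 2 * sqrt t.
Proof.
  intros Ht. split.
  - rewrite <- ln_1. apply ln_le; lra.
  - assert (Hs : 0 < sqrt t) by (apply sqrt_lt_R0; lra).
    assert (E : ln t = 2 * ln (sqrt t)).
    { rewrite <- (sqrt_sqrt t) at 1 by lra. rewrite ln_mult by auto. ring. }
    rewrite E. pose proof (exp_ineq1_le (ln (sqrt t))). rewrite exp_ln in H by auto. lra.
Qed.

Lemma is_derive_eq (f g : R -> R) x l l' : (forall y, f y = g y) -> l = l' -> is_derive f x l -> is_derive g x l'.
Proof. intros H1 H2 H3. subst l'. apply (is_derive_ext f g); auto. Qed.

Definition gf (c t : R) := Rpower t c * exp (- t).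

Lemma Rpower_pos x y : 0 < Rpower x y.
Proof. unfold Rpower. apply exp_pos. Qed.

Lemma Rpower_derive c t : 0 < t -> is_derive (fun x => Rpower x c) t (c * Rpower t (c-1)).
Proof. intros. apply is_derive_Reals, derivable_pt_lim_power; auto. Qed.

Lemma Rpower_cont c t : 0 < t -> continuous (fun x => Rpower x c) t.
Proof. intros. apply (@ex_derive_continuous R_AbsRing R_NormedModule). eexists. apply Rpower_derive; auto. Qed.

Lemma gf_derive c t : 0 < t -> is_derive (gf c) t (c * Rpower t (c-1) * exp (-t) - Rpower t c * exp (-t)).
Proof.
  intros Ht. unfold gf.

  assert (H := is_derive_mult (fun x => Rpower x c) (fun x => exp (-x)) t _ (exp (-t) * -1) (Rpower_derive c t Ht)).
  replace (c * Rpower t (c - 1) * exp (- t) - Rpower t c * exp (- t)) with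
    (plus (mult (c * Rpower t (c - 1)) (exp (- t))) (mult (Rpower t c) (exp (- t) * -1))).
  2:{ unfold plus, mult; simpl. ring. }
  assert (He : is_derive (fun x => exp (-x)) t (exp (-t) * -1)) by (auto_derive; auto; ring).
  apply (H He). intros; unfold mult; simpl; ring.
Qed.

Lemma gf_cont c t : 0 < t -> continuous (gf c) t.
Proof. intros. apply (@ex_derive_continuous R_AbsRing R_NormedModule). eexists. apply gf_derive; auto. Qed.

Lemma gf_pos c t : 0 < gf c t.
Proof. unfold gf. apply Rmult_lt_0_compat. apply Rpower_pos. apply exp_pos. Qed.

Lemma gf_exRInt c a b : 0 < a -> 0 < b -> ex_RInt (gf c) a b.
Proof.
  intros. apply (@ex_RInt_continuous R_CompleteNormedModule). intros z Hz. apply gf_cont.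
  destruct (Rle_dec a b); [rewrite Rmin_left in Hz | rewrite Rmin_right in Hz]; lra.
Qed.

Lemma gen_cauchy (F : (R -> Prop) -> Prop) (HF : ProperFilter F) (f : R -> R) (b : R) :
  F (fun a => ex_RInt f a b) ->
  (forall eps : posreal, exists P, F P /\ forall u v, P u -> P v -> Rabs (RInt f u b - RInt f v b) < eps) ->
  ex_RInt_gen f F (at_point b).
Proof.
  intros Hex Hc.
  destruct (proj1 (filterlim_locally_cauchy (F:=F) (fun a => RInt f a b))) as [l Hl].
  { intros eps. destruct (Hc eps) as [P [HP HPc]]. exists P; split; auto.
    intros u v Hu Hv. specialize (HPc v u Hv Hu). exact HPc. }
  exists l. intros P HP. unfold filtermapi.
  apply Filter_prod with (Q := fun a => ex_RInt f a b /\ P (RInt f a b)) (R := fun y => y = b).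
  - apply filter_and; auto. apply Hl; auto.
  - exact (eq_refl b).
  - intros x y [H1 H2] Hy. simpl in Hy. subst y. exists (RInt f x b). split; auto. apply (@RInt_correct R_CompleteNormedModule); auto.
Qed.

Lemma RInt_diff (f : R -> R) u v b : ex_RInt f u v -> ex_RInt f v b -> RInt f u b - RInt f v b = RInt f u v.
Proof.
  intros H1 H2. rewrite <- (RInt_Chasles f u v b H1 H2). unfold plus; simpl. ring.
Qed.

Lemma sym_bound (P : R -> Prop) (I : R -> R) e :
  (forall u v, P u -> P v -> u <= v -> Rabs (I u - I v) < e) ->
  forall u v, P u -> P v -> Rabs (I u - I v) < e.
Proof.
  intros H u v Hu Hv. destruct (Rle_dec u v). auto. rewrite Rabs_minus_sym. apply H; auto; lra.
Qed.

Lemma int_Rpower c u v : 0 < u -> 0 < v -> -1 < c ->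
  is_RInt (fun t => Rpower t c) u v ((Rpower v (c+1) - Rpower u (c+1)) / (c+1)).
Proof.
  intros Hu Hv Hc.
  replace ((Rpower v (c+1) - Rpower u (c+1)) / (c+1)) with
    (minus (Rpower v (c+1) / (c+1)) (Rpower u (c+1) / (c+1))) by (unfold minus, plus, opp; simpl; field; lra).
  apply (is_RInt_derive (fun t => Rpower t (c+1) / (c+1))).
  - intros x Hx. assert (0 < x) by (destruct (Rle_dec u v); [rewrite Rmin_left in Hx | rewrite Rmin_right in Hx]; lra).
    assert (Hd := Rpower_derive (c+1) x H).
    apply (is_derive_scal (fun t => Rpower t (c+1)) x (/(c+1))) in Hd.
    eapply is_derive_eq; [| | exact Hd].
    intros; unfold scal; simpl; unfold mult; simpl; field; lra.
    unfold scal; simpl; unfold mult; simpl. replace (c+1-1) with c by ring. field; lra.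
  - intros x Hx. apply Rpower_cont.
    destruct (Rle_dec u v); [rewrite Rmin_left in Hx | rewrite Rmin_right in Hx]; lra.
Qed.

Lemma int_expm c u v :
  is_RInt (fun t => c * exp (- t / 2)) u v (2 * c * (exp (- u / 2) - exp (- v / 2))).
Proof.
  replace (2 * c * (exp (- u / 2) - exp (- v / 2))) with
    (minus (- 2 * c * exp (- v / 2)) (- 2 * c * exp (- u / 2))) by (unfold minus, plus, opp; simpl; ring).
  apply (is_RInt_derive (fun t => - 2 * c * exp (- t / 2))).
  - intros x _. auto_derive; auto. unfold Rdiv. field.
  - intros x _. apply (@ex_derive_continuous R_AbsRing R_NormedModule). auto_derive; auto.
Qed.

Lemma gf_le_near0 c t : 0 < t -> gf c t <= Rpower t c.
Proof.
  intros. unfold gf. pose proof (Rpower_pos t c).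
  assert (exp (-t) <= 1) by (rewrite <- exp_0; apply exp_le'; lra). nra.
Qed.

Lemma gf_le_inf c t : 1 <= t -> gf c t <= exp (2 * c * c) * exp (- t / 2).
Proof.
  intros Ht. unfold gf, Rpower. rewrite <- !exp_plus. apply exp_le'.
  destruct (ln_le_sqrt t Ht) as [H1 H2].
  assert (Hs : sqrt t * sqrt t = t) by (apply sqrt_sqrt; lra).
  assert (0 <= sqrt t) by apply sqrt_pos.
  destruct (Rle_dec 0 c).
  - assert (c * ln t <= c * (2 * sqrt t)) by (apply Rmult_le_compat_l; auto). assert (0 <= (sqrt t - 2*c)*(sqrt t - 2*c)) by apply Rle_0_sqr. unfold Rdiv. nra.
  - assert (c * ln t <= 0) by nra. assert (0 <= c*c) by apply Rle_0_sqr. unfold Rdiv. lra.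
Qed.

Lemma Rpower_small v p : 0 < v <= 1 -> /2 <= p -> Rpower v p <= sqrt v.
Proof.
  intros Hv Hp. rewrite <- Rpower_sqrt by lra. unfold Rpower. apply exp_le'.
  assert (ln v <= 0) by (rewrite <- ln_1; apply ln_le; lra). nra.
Qed.

Lemma gamma_ex0 c : -1/2 <= c -> ex_RInt_gen (gf c) (at_right 0) (at_point 1).
Proof.
  intros Hc. apply gen_cauchy. apply at_right_proper_filter.
  - exists (mkposreal 1 Rlt_0_1). intros y _ Hy. apply gf_exRInt; lra.
  - intros eps.
    set (d := Rmin 1 (eps * eps / 4)).
    assert (Hd : 0 < d) by (unfold d; apply Rmin_glb_lt; [lra| pose proof (cond_pos eps); nra]).
    exists (fun t => 0 < t < d). split.
    + exists (mkposreal d Hd). intros y Hy Hy0. split; auto.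
      unfold ball in Hy; simpl in Hy; unfold AbsRing_ball, abs, minus, plus, opp in Hy; simpl in Hy.
      apply Rabs_def2 in Hy. lra.
    + apply sym_bound. intros u v Hu Hv Huv.
      assert (d <= 1) by apply Rmin_l. assert (d <= eps*eps/4) by apply Rmin_r.
      rewrite RInt_diff by (apply gf_exRInt; lra).
      assert (HI0 : 0 <= RInt (gf c) u v).
      { apply RInt_ge_0; auto. apply gf_exRInt; lra. intros; left; apply gf_pos. }
      assert (HI1 : RInt (gf c) u v <= RInt (fun t => Rpower t c) u v).
      { apply RInt_le; auto. apply gf_exRInt; lra. eexists; apply int_Rpower; lra.
        intros; apply gf_le_near0; lra. }
      rewrite (is_RInt_unique _ _ _ _ (int_Rpower c u v ltac:(lra) ltac:(lra) ltac:(lra))) in HI1.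
      pose proof (Rpower_pos u (c+1)).
      assert (Rpower v (c+1) <= sqrt v) by (apply Rpower_small; lra).
      assert (sqrt v < eps / 2).
      { apply Rsqr_incrst_0. unfold Rsqr. rewrite sqrt_sqrt by lra. pose proof (cond_pos eps). nra.
        apply sqrt_pos. pose proof (cond_pos eps); lra. }
      assert ((Rpower v (c + 1) - Rpower u (c + 1)) / (c + 1) <= 2 * Rpower v (c+1)).
      { apply Rmult_le_reg_r with (c+1). lra. unfold Rdiv. rewrite Rmult_assoc, Rinv_l by lra. pose proof (Rpower_pos v (c+1)). nra. }
      rewrite Rabs_pos_eq by auto. lra.
Qed.

Lemma gamma_ex_inf c : ex_RInt_gen (gf c) (at_point 1) (Rbar_locally p_infty).
Proof.
  assert (H : ex_RInt_gen (gf c) (Rbar_locally p_infty) (at_point 1)).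
  { apply gen_cauchy. apply Rbar_locally_filter.
    - exists 0. intros. apply gf_exRInt; lra.
    - intros eps. set (K := exp (2 * c * c)).
      assert (HK : 0 < K) by apply exp_pos.
      assert (He : 0 < eps / (2 * K)) by (pose proof (cond_pos eps); apply Rdiv_lt_0_compat; lra).
      set (U := Rmax 1 (- 2 * ln (eps / (2 * K)))).
      exists (fun t => U < t). split. exists U; auto.
      apply sym_bound. intros u v Hu Hv Huv.
      assert (1 <= U) by apply Rmax_l. assert (- 2 * ln (eps / (2 * K)) <= U) by apply Rmax_r.
      rewrite RInt_diff by (apply gf_exRInt; lra).
      assert (HI0 : 0 <= RInt (gf c) u v).
      { apply RInt_ge_0; auto. apply gf_exRInt; lra. intros; left; apply gf_pos. }
      assert (HI1 : RInt (gf c) u v <= RInt (fun t => K * exp (- t / 2)) u v).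
      { apply RInt_le; auto. apply gf_exRInt; lra. eexists; apply int_expm.
        intros; apply gf_le_inf; lra. }
      rewrite (is_RInt_unique _ _ _ _ (int_expm K u v)) in HI1.
      pose proof (exp_pos (- v / 2)).
      assert (Hex : exp (- u / 2) < eps / (2 * K)).
      { rewrite <- (exp_ln (eps / (2 * K))) by auto. apply exp_increasing. lra. }
      assert (2 * K * exp (- u / 2) < eps).
      { apply Rmult_lt_compat_l with (r := 2 * K) in Hex; [|lra].
        replace (2 * K * (eps / (2 * K))) with (pos eps) in Hex by (field; lra). lra. }
      rewrite Rabs_pos_eq by auto. nra. }
  destruct H as [l Hl]. exists (opp l). apply is_RInt_gen_swap; auto.
Qed.

Lemma gamma_ex c : -1/2 <= c -> ex_RInt_gen (gf c) (at_right 0) (Rbar_locally p_infty).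
Proof.
  intros Hc. apply (ex_RInt_gen_Chasles (gf c) 1).
  apply gamma_ex0; auto. apply gamma_ex_inf.
Qed.

Lemma Gamma_gf a : Gamma a = RInt_gen (gf (a - 1)) (at_right 0) (Rbar_locally p_infty).
Proof. reflexivity. Qed.

Lemma Gamma_is a : /2 <= a -> is_RInt_gen (gf (a-1)) (at_right 0) (Rbar_locally p_infty) (Gamma a).
Proof.
  intros Ha. rewrite Gamma_gf. apply (@RInt_gen_correct R_CompleteNormedModule).
  apply Proper_StrongProper, at_right_proper_filter.
  apply Proper_StrongProper, Rbar_locally_filter.
  apply gamma_ex; lra.
Qed.

Lemma at_right_pt (Q : R -> Prop) : at_right 0 Q -> exists x, 0 < x < 1 /\ Q x.
Proof.
  intros [eps He]. exists (Rmin (eps/2) (1/2)).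
  assert (0 < Rmin (eps/2) (1/2)) by (apply Rmin_glb_lt; pose proof (cond_pos eps); lra).
  assert (Rmin (eps/2) (1/2) <= eps/2) by apply Rmin_l.
  assert (Rmin (eps/2) (1/2) <= 1/2) by apply Rmin_r.
  split. lra. apply He; auto.
  unfold ball; simpl; unfold AbsRing_ball, abs, minus, plus, opp; simpl.
  rewrite Ropp_0, Rplus_0_r, Rabs_pos_eq by lra. pose proof (cond_pos eps); lra.
Qed.

Lemma Gamma_pos a : /2 <= a -> 0 < Gamma a.
Proof.
  intros Ha. pose proof (Gamma_is a Ha) as Hl. set (l := Gamma a) in *.
  set (c := a - 1) in *.
  assert (Hm : 0 < RInt (gf c) 1 2).
  { apply RInt_gt_0. lra. intros; apply gf_pos. intros; apply gf_cont; lra. }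
  destruct (Rlt_le_dec l (RInt (gf c) 1 2)) as [Hlt|Hge]; [|lra].
  exfalso.
  assert (Hb : locally l (fun y => Rabs (y - l) < RInt (gf c) 1 2 - l)).
  { assert (Hp : 0 < RInt (gf c) 1 2 - l) by lra.
    exists (mkposreal _ Hp). intros y Hy. exact Hy. }
  specialize (Hl _ Hb). destruct Hl as [Q R HQ HR HQR].
  destruct (at_right_pt Q HQ) as [x [Hx HQx]].
  destruct HR as [M HM].
  set (y := Rmax M 2 + 1).
  assert (HRy : R y) by (apply HM; unfold y; pose proof (Rmax_l M 2); lra).
  assert (Hy2 : 2 < y) by (unfold y; pose proof (Rmax_r M 2); lra).
  destruct (HQR x y HQx HRy) as [z [Hz Hzl]]. simpl in Hz.
  apply (@is_RInt_unique R_CompleteNormedModule) in Hz.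
  assert (E : RInt (gf c) 1 2 <= RInt (gf c) x y).
  { rewrite <- (RInt_Chasles (gf c) x 1 y) by (apply gf_exRInt; lra).
    rewrite <- (RInt_Chasles (gf c) 1 2 y) by (apply gf_exRInt; lra).
    unfold plus; simpl.
    assert (0 <= RInt (gf c) x 1) by (apply RInt_ge_0; [lra| apply gf_exRInt; lra| intros; left; apply gf_pos]).
    assert (0 <= RInt (gf c) 2 y) by (apply RInt_ge_0; [lra| apply gf_exRInt; lra| intros; left; apply gf_pos]).
    lra. }
  rewrite Hz in E. apply Rabs_def2 in Hzl. lra.
Qed.

Lemma pos_prod : filter_prod (at_right 0) (Rbar_locally p_infty) (fun ab => 0 < fst ab /\ 0 < snd ab).
Proof.
  apply Filter_prod with (fun x => 0 < x) (fun x => 0 < x).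
  exists (mkposreal 1 Rlt_0_1); intros; auto. exists 0; auto.
  intros; simpl; auto.
Qed.

Lemma prod_pos_int (P : R -> Prop) : (forall x, 0 < x -> P x) ->
  filter_prod (at_right 0) (Rbar_locally p_infty)
    (fun ab => forall x, Rmin (fst ab) (snd ab) <= x <= Rmax (fst ab) (snd ab) -> P x).
Proof.
  intros HP. eapply filter_imp; [|exact pos_prod]. intros [u v] [Hu Hv] x Hx. simpl in *.
  apply HP. destruct (Rle_dec u v); [rewrite Rmin_left in Hx | rewrite Rmin_right in Hx]; lra.
Qed.

Lemma prod_pos_int' (P : R -> Prop) : (forall x, 0 < x -> P x) ->
  filter_prod (at_right 0) (Rbar_locally p_infty)
    (fun ab => forall x, Rmin (fst ab) (snd ab) < x < Rmax (fst ab) (snd ab) -> P x).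
Proof.
  intros HP. eapply filter_imp; [|exact (prod_pos_int P HP)]. intros [u v] H x Hx. apply H. lra.
Qed.

Lemma gf_lim0 a : /2 <= a -> filterlim (fun t => - gf a t) (at_right 0) (locally 0).
Proof.
  intros Ha. apply filterlim_locally. intros eps.
  assert (Hd : 0 < Rmin 1 (eps * eps)) by (apply Rmin_glb_lt; [lra| pose proof (cond_pos eps); nra]).
  exists (mkposreal _ Hd). intros y Hy Hy0. simpl in Hy.
  unfold ball in Hy |- *; simpl in Hy |- *; unfold AbsRing_ball, abs, minus, plus, opp in Hy |- *; simpl in Hy |- *.
  rewrite Ropp_0, Rplus_0_r in Hy. rewrite Ropp_0, Rplus_0_r.
  rewrite Rabs_pos_eq in Hy by lra.
  assert (y < 1) by (pose proof (Rmin_l 1 (eps*eps)); lra).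
  assert (y < eps * eps) by (pose proof (Rmin_r 1 (eps*eps)); lra).
  rewrite Rabs_Ropp, Rabs_pos_eq by (left; apply gf_pos).
  pose proof (gf_le_near0 a y Hy0). assert (Rpower y a <= sqrt y) by (apply Rpower_small; lra).
  assert (sqrt y < eps).
  { apply Rsqr_incrst_0. unfold Rsqr. rewrite sqrt_sqrt by lra. lra.
    apply sqrt_pos. pose proof (cond_pos eps); lra. }
  lra.
Qed.

Lemma gf_liminf a : filterlim (fun t => - gf a t) (Rbar_locally p_infty) (locally 0).
Proof.
  apply filterlim_locally. intros eps.
  set (K := exp (2 * a * a)). assert (HK : 0 < K) by apply exp_pos.
  assert (He : 0 < eps / K) by (pose proof (cond_pos eps); apply Rdiv_lt_0_compat; lra).
  exists (Rmax 1 (- 2 * ln (eps / K))). intros y Hy.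
  assert (1 <= y) by (pose proof (Rmax_l 1 (- 2 * ln (eps / K))); lra).
  assert (- 2 * ln (eps / K) < y) by (pose proof (Rmax_r 1 (- 2 * ln (eps / K))); lra).
  unfold ball; simpl; unfold AbsRing_ball, abs, minus, plus, opp; simpl.
  rewrite Ropp_0, Rplus_0_r.
  rewrite Rabs_Ropp, Rabs_pos_eq by (left; apply gf_pos).
  pose proof (gf_le_inf a y H).
  assert (Hex : exp (- y / 2) < eps / K).
  { rewrite <- (exp_ln (eps / K)) by auto. apply exp_increasing. lra. }
  apply Rmult_lt_compat_l with (r := K) in Hex; [|lra].
  replace (K * (eps / K)) with (pos eps) in Hex by (field; lra). fold K in H1. lra.
Qed.

Lemma gf_dcont a c t : 0 < t -> continuous (fun t => gf a t - c * gf (a-1) t) t.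
Proof.
  intros Ht. apply (@ex_derive_continuous R_AbsRing R_NormedModule).
  eexists. apply (is_derive_minus (gf a) (fun t => c * gf (a-1) t)).
  apply gf_derive; auto. apply is_derive_scal. apply gf_derive; auto.
Qed.

Lemma Gamma_rec a : /2 <= a -> Gamma (a+1) = a * Gamma a.
Proof.
  intros Ha.
  set (F := fun t => - gf a t).
  assert (HD : forall t, 0 < t -> is_derive F t (gf a t - a * gf (a-1) t)).
  { intros t Ht. unfold F. pose proof (gf_derive a t Ht) as H. apply is_derive_opp in H.
    eapply is_derive_eq; [| |exact H]. intros; reflexivity. unfold opp, gf; simpl. ring. }
  assert (HDe : forall t, 0 < t -> Derive F t = gf a t - a * gf (a-1) t).
  { intros. apply is_derive_unique. apply HD; auto. }
  assert (H1 : is_RInt_gen (Derive F) (at_right 0) (Rbar_locally p_infty) (0 - 0)).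
  { apply is_RInt_gen_Derive.
    - apply prod_pos_int. intros. eexists; apply HD; auto.
    - apply prod_pos_int. intros x Hx.
      apply (continuous_ext_loc _ (fun t => gf a t - a * gf (a-1) t)).
      + assert (Hx2 : 0 < x / 2) by lra. exists (mkposreal _ Hx2). intros y Hy.
        unfold ball in Hy; simpl in Hy; unfold AbsRing_ball, abs, minus, plus, opp in Hy; simpl in Hy.
        apply Rabs_def2 in Hy. rewrite HDe; auto. lra.
      + apply gf_dcont; auto.
    - apply gf_lim0; auto.
    - apply gf_liminf. }
  apply (is_RInt_gen_ext _ (fun t => gf a t - a * gf (a-1) t)) in H1.
  2:{ apply prod_pos_int'. intros; apply HDe; auto. }
  assert (H2 := Gamma_is a ltac:(lra)). apply (is_RInt_gen_scal _ a) in H2.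
  assert (H3 := is_RInt_gen_plus _ _ _ _ H1 H2).
  apply (is_RInt_gen_ext _ (gf a)) in H3.
  2:{ apply filter_forall. intros; unfold plus, scal; simpl; unfold mult; simpl. ring. }
  rewrite Gamma_gf. replace (a + 1 - 1) with a by ring.
  apply (@is_RInt_gen_unique R_CompleteNormedModule) in H3.
  rewrite H3. unfold plus, scal; simpl; unfold mult; simpl. ring.
  apply Proper_StrongProper, at_right_proper_filter.
  apply Proper_StrongProper, Rbar_locally_filter.
Qed.



Lemma dR_plus (f g : R -> R) x a b : is_derive f x a -> is_derive g x b -> is_derive (fun y => f y + g y) x (a + b).
Proof. intros. apply (is_derive_plus f g x a b); auto. Qed.
Lemma dR_minus (f g : R -> R) x a b : is_derive f x a -> is_derive g x b -> is_derive (fun y => f y - g y) x (a - b).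
Proof. intros. apply (is_derive_minus f g x a b); auto. Qed.
Lemma dR_scal (f : R -> R) x k a : is_derive f x a -> is_derive (fun y => k * f y) x (k * a).
Proof. intros. apply is_derive_scal; auto. Qed.
Lemma dR_const (c x : R) : is_derive (fun _ => c) x 0.
Proof. apply (is_derive_const c x). Qed.
Lemma dR_lin (c k x : R) : is_derive (fun u => c + k * u) x k.
Proof. eapply is_derive_eq; [| | apply (dR_plus (fun _ => c) (fun u => k * u) x 0 (k * 1)); [apply dR_const| apply dR_scal; apply (is_derive_id x)]]; intros; simpl; ring. Qed.
Lemma dR_comp_lin (F f : R -> R) c k u : (forall y, is_derive F y (f y)) ->
  is_derive (fun u => F (c + k * u)) u (k * f (c + k * u)).
Proof.
  intros HF. eapply is_derive_eq; [intros; reflexivity| |apply (is_derive_comp F (fun u => c + k * u) u (f (c + k*u)) k); [apply HF| apply dR_lin]].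
  unfold scal; simpl; unfold mult; simpl; ring.
Qed.

Lemma der_contpt (f : R -> R) x l : is_derive f x l -> continuity_pt f x.
Proof.
  intros H. apply continuity_pt_filterlim. apply (@ex_derive_continuous R_AbsRing R_NormedModule). exists l; auto.
Qed.

Lemma mvt_bound (f df : R -> R) a b K : (forall y, is_derive f y (df y)) ->
  (forall c, Rmin a b <= c <= Rmax a b -> Rabs (df c) <= K) -> Rabs (f b - f a) <= K * Rabs (b - a).
Proof.
  intros Hd HK. destruct (MVT_gen f a b df) as [c [Hc E]].
  intros; apply Hd. intros; eapply der_contpt; apply Hd.
  rewrite E, Rabs_mult. apply Rmult_le_compat_r. apply Rabs_pos. apply HK; auto.
Qed.

Lemma lin_aux1 (a z : R) : a + 1 * z = z + a. Proof. ring. Qed.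
Lemma lin_aux0 (z : R) : 0 + 1 * z = z. Proof. ring. Qed.
Lemma lin_aux2 (a z : R) : a + 1 * z = a + z. Proof. ring. Qed.

Definition D2 (f : R -> R) y s := f (y + 2 * s) - 2 * f (y + s) + f y.

Section Smooth.
Variable f : R -> R.
Hypothesis fcont : forall y, continuous f y.

Definition F1 y := RInt f 0 y.
Lemma F1_der y : is_derive F1 y (f y).
Proof.
  apply (is_derive_RInt f F1 0 y).
  apply filter_forall. intros b. apply (@RInt_correct R_CompleteNormedModule).
  apply (@ex_RInt_continuous R_CompleteNormedModule). intros; apply fcont.
  apply fcont.
Qed.
Definition F2 y := RInt F1 0 y.
Lemma F2_der y : is_derive F2 y (F1 y).
Proof.
  assert (Hc : forall z, continuous F1 z).
  { intros z. apply (@ex_derive_continuous R_AbsRing R_NormedModule). exists (f z). apply F1_der. }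
  apply (is_derive_RInt F1 F2 0 y).
  apply filter_forall. intros b. apply (@RInt_correct R_CompleteNormedModule).
  apply (@ex_RInt_continuous R_CompleteNormedModule). intros; apply Hc.
  apply Hc.
Qed.

Lemma D2_der_y (F G : R -> R) s : (forall y, is_derive F y (G y)) -> forall y, is_derive (fun y => D2 F y s) y (D2 G y s).
Proof.
  intros HF y. unfold D2.
  apply (is_derive_eq (fun y => F (2*s + 1*y) - 2 * F (s + 1*y) + F (0 + 1*y)) _ y
    (1 * G (2 * s + 1 * y) - 2 * (1 * G (s + 1 * y)) + 1 * G (0 + 1 * y))).
  intros z. rewrite (lin_aux1 (2*s) z), (lin_aux1 s z), (lin_aux0 z). reflexivity.
  rewrite (lin_aux1 (2*s) y), (lin_aux1 s y), (lin_aux0 y). rewrite !Rmult_1_l; reflexivity.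
  apply dR_plus; [apply dR_minus|].
  apply (dR_comp_lin F G (2*s) 1 y HF).
  apply dR_scal. apply (dR_comp_lin F G s 1 y HF).
  apply (dR_comp_lin F G 0 1 y HF).
Qed.

Lemma D2_der_s (F G : R -> R) y : (forall y, is_derive F y (G y)) -> forall s, is_derive (fun s => D2 F y s) s (2 * G (y + 2 * s) - 2 * G (y + s)).
Proof.
  intros HF s. unfold D2.
  apply (is_derive_eq (fun s => F (y + 2*s) - 2 * F (y + 1*s) + F y) _ s
    (2 * G (y + 2 * s) - 2 * (1 * G (y + 1 * s)) + 0)).
  intros z. rewrite (lin_aux2 y z). reflexivity.
  rewrite (lin_aux2 y s). rewrite Rmult_1_l, Rplus_0_r; reflexivity.
  apply dR_plus; [apply dR_minus|].
  apply (dR_comp_lin F G y 2 s HF).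
  apply dR_scal. apply (dR_comp_lin F G y 1 s HF).
  apply dR_const.
Qed.

Variable h W : R.
Hypothesis hpos : 0 < h.
Hypothesis HW : forall y s, 0 <= y -> 0 < s <= h -> Rabs (D2 f y s) <= W.

Definition phi y := (8 * D2 F2 y (h/2) - D2 F2 y h) / (h * h).
Definition phi1 y := (8 * D2 F1 y (h/2) - D2 F1 y h) / (h * h).
Definition phi2 y := (8 * D2 f y (h/2) - D2 f y h) / (h * h).

Lemma phi_der y : is_derive phi y (phi1 y).
Proof.
  unfold phi, phi1. unfold Rdiv.
  eapply is_derive_eq; [intros; rewrite Rmult_comm; reflexivity| rewrite Rmult_comm; reflexivity|].
  apply dR_scal. apply dR_minus. apply dR_scal. apply D2_der_y. apply F2_der. apply D2_der_y. apply F2_der.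
Qed.

Lemma phi1_der y : is_derive phi1 y (phi2 y).
Proof.
  unfold phi1, phi2. unfold Rdiv.
  eapply is_derive_eq; [intros; rewrite Rmult_comm; reflexivity| rewrite Rmult_comm; reflexivity|].
  apply dR_scal. apply dR_minus. apply dR_scal. apply D2_der_y. apply F1_der. apply D2_der_y. apply F1_der.
Qed.

Lemma W_nonneg : 0 <= W.
Proof. pose proof (HW 0 h ltac:(lra) ltac:(lra)). pose proof (Rabs_pos (D2 f 0 h)). lra. Qed.

Lemma phi2_bound y : 0 <= y -> Rabs (phi2 y) <= 9 * W / (h * h).
Proof.
  intros Hy. unfold phi2. unfold Rdiv. rewrite Rabs_mult.
  rewrite (Rabs_pos_eq (/ (h*h))) by (left; apply Rinv_0_lt_compat; nra).
  apply Rmult_le_compat_r. left; apply Rinv_0_lt_compat; nra.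
  pose proof (HW y (h/2) Hy ltac:(lra)). pose proof (HW y h Hy ltac:(lra)).
  eapply Rle_trans. apply Rabs_triang. rewrite Rabs_Ropp, Rabs_mult, Rabs_pos_eq by lra. lra.
Qed.

Lemma taylor_bound x t : 0 <= x -> 0 <= t ->
  Rabs (phi t - phi x - phi1 x * (t - x)) <= 9 * W / (h * h) * ((t - x) * (t - x)).
Proof.
  intros Hx Ht.
  set (K := 9 * W / (h * h)).
  set (psi := fun u => phi u - phi x - phi1 x * (u - x)).
  assert (Hpsi : forall u, is_derive psi u (phi1 u - phi1 x)).
  { intros u. unfold psi. eapply is_derive_eq; [intros; reflexivity| |].
    2:{ apply dR_minus. apply dR_minus. apply phi_der. apply dR_const.
        apply dR_scal. apply dR_minus. apply (is_derive_id u). apply dR_const. }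
    unfold one; simpl. rewrite Rminus_0_r, Rminus_0_r, Rmult_1_r. reflexivity. }
  assert (H := mvt_bound psi (fun u => phi1 u - phi1 x) x t (K * Rabs (t - x)) Hpsi).
  replace (phi t - phi x - phi1 x * (t - x)) with (psi t - psi x) by (unfold psi; ring).
  replace ((t - x) * (t - x)) with (Rabs (t - x) * Rabs (t - x)) by (rewrite <- Rabs_mult; apply Rabs_pos_eq; apply Rle_0_sqr).
  rewrite <- Rmult_assoc. apply H.
  intros c Hc.
  assert (Hcx : Rabs (c - x) <= Rabs (t - x)).
  { destruct (Rle_dec x t) as [Hle|Hle]; [rewrite Rmin_left, Rmax_right in Hc by lra | rewrite Rmin_right, Rmax_left in Hc by lra];
    unfold Rabs; repeat destruct Rcase_abs; lra. }
  assert (H2 := mvt_bound phi1 phi2 x c K phi1_der).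
  eapply Rle_trans. apply H2.
  - intros d Hd. apply phi2_bound.
    destruct (Rle_dec x t); [rewrite Rmin_left, Rmax_right in Hc by lra| rewrite Rmin_right, Rmax_left in Hc by lra];
    destruct (Rle_dec x c); [rewrite Rmin_left in Hd by lra| rewrite Rmin_right in Hd by lra| rewrite Rmin_left in Hd by lra| rewrite Rmin_right in Hd by lra]; lra.
  - apply Rmult_le_compat_l. unfold K. unfold Rdiv. apply Rmult_le_pos. pose proof W_nonneg; lra.
    left; apply Rinv_0_lt_compat; nra. auto.
Qed.

Section Approx.
Variable x : R.
Hypothesis Hx : 0 <= x.

Definition BPhi u := 8 * (F2 (x + 1 * u) - 2 * F2 (x + /2 * u) + F2 x) - (F2 (x + 2 * u) - 2 * F2 (x + 1 * u) + F2 x) - u * u * f x.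
Definition BPhi1 u := 8 * (1 * F1 (x + 1 * u) - 2 * (/2 * F1 (x + /2 * u)) + 0) - (2 * F1 (x + 2 * u) - 2 * (1 * F1 (x + 1 * u)) + 0) - (2 * u) * f x.
Definition BPhi2 u := 8 * (1 * (1 * f (x + 1 * u)) - 2 * (/2 * (/2 * f (x + /2 * u))) + 0) - (2 * (2 * f (x + 2 * u)) - 2 * (1 * (1 * f (x + 1 * u))) + 0) - 2 * f x.

Lemma BPhi_der u : is_derive BPhi u (BPhi1 u).
Proof.
  unfold BPhi, BPhi1.
  apply dR_minus. apply dR_minus.
  apply dR_scal. apply dR_plus. apply dR_minus. apply (dR_comp_lin F2 F1). apply F2_der.
  apply dR_scal. apply (dR_comp_lin F2 F1). apply F2_der. apply dR_const.
  apply dR_plus. apply dR_minus. apply (dR_comp_lin F2 F1). apply F2_der.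
  apply dR_scal. apply (dR_comp_lin F2 F1). apply F2_der. apply dR_const.
  apply (is_derive_eq (fun u => (u * u) * f x) _ u ((2 * u) * f x)). intros; reflexivity. reflexivity.
  apply (is_derive_eq (fun u => f x * (u * u)) _ u (f x * (2 * u))). intros; simpl; apply Rmult_comm. apply Rmult_comm.
  apply dR_scal. apply (is_derive_eq (fun u => u * u) _ u (1 * u + u * 1)). intros; reflexivity. lra.
  apply (is_derive_mult (fun u => u) (fun u => u) u 1 1); try apply (is_derive_id u). intros; simpl; unfold mult; simpl; ring.
Qed.

Lemma BPhi1_der u : is_derive BPhi1 u (BPhi2 u).
Proof.
  unfold BPhi1, BPhi2.
  apply dR_minus. apply dR_minus.
  apply dR_scal. apply dR_plus. apply dR_minus. apply dR_scal. apply (dR_comp_lin F1 f). apply F1_der.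
  apply dR_scal. apply dR_scal. apply (dR_comp_lin F1 f). apply F1_der. apply dR_const.
  apply dR_plus. apply dR_minus. apply dR_scal. apply (dR_comp_lin F1 f). apply F1_der.
  apply dR_scal. apply dR_scal. apply (dR_comp_lin F1 f). apply F1_der. apply dR_const.
  apply (is_derive_eq (fun u => f x * (2 * u)) _ u (f x * (2 * 1))). intros; simpl; apply Rmult_comm. lra.
  apply dR_scal. apply dR_scal. apply (is_derive_id u).
Qed.

Lemma BPhi2_eq u : BPhi2 u = -4 * D2 f x u + 2 * D2 f x (u/2).
Proof.
  unfold BPhi2, D2.
  replace (x + 1 * u) with (x + u) by lra. replace (x + /2 * u) with (x + u/2) by lra.
  replace (x + 2 * (u/2)) with (x + u) by field. field.
Qed.

Lemma BPhi2_bd u : 0 <= u <= h -> Rabs (BPhi2 u) <= 6 * W.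
Proof.
  intros Hu. rewrite BPhi2_eq. pose proof W_nonneg.
  destruct (Req_dec u 0) as [->|Hu0].
  - assert (Z : forall s, s = 0 -> D2 f x s = 0).
    { intros s ->. unfold D2. replace (x + 2 * 0) with x by lra. replace (x + 0) with x by lra. ring. }
    rewrite (Z 0), (Z (0/2)) by lra. replace (-4 * 0 + 2 * 0) with 0 by ring. rewrite Rabs_R0. lra.
  - pose proof (HW x u Hx ltac:(lra)). pose proof (HW x (u/2) Hx ltac:(lra)).
    eapply Rle_trans. apply Rabs_triang. rewrite !Rabs_mult. rewrite (Rabs_pos_eq 2) by lra.
    rewrite Rabs_left by lra. lra.
Qed.

Lemma BPhi1_bd u : 0 <= u <= h -> Rabs (BPhi1 u) <= 6 * W * u.
Proof.
  intros Hu.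
  assert (E0 : BPhi1 0 = 0).
  { unfold BPhi1. replace (x + 1 * 0) with x by lra. replace (x + /2 * 0) with x by lra.
    replace (x + 2 * 0) with x by lra. field. }
  pose proof (mvt_bound BPhi1 BPhi2 0 u (6 * W) BPhi1_der) as H.
  rewrite E0, Rminus_0_r, Rminus_0_r, (Rabs_pos_eq u) in H by lra. apply H.
  intros c Hc. rewrite Rmin_left, Rmax_right in Hc by lra. apply BPhi2_bd. lra.
Qed.

Lemma approx_bound : Rabs (phi x - f x) <= 6 * W.
Proof.
  assert (E0 : BPhi 0 = 0).
  { unfold BPhi. replace (x + 1 * 0) with x by lra. replace (x + /2 * 0) with x by lra.
    replace (x + 2 * 0) with x by lra. field. }
  assert (Eh : phi x - f x = BPhi h / (h * h)).
  { unfold phi, BPhi, D2. replace (x + 2 * (h/2)) with (x + 1 * h) by field.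
    replace (x + h/2) with (x + /2 * h) by lra. replace (x + h) with (x + 1 * h) by lra.
    field. lra. }
  pose proof (mvt_bound BPhi BPhi1 0 h (6 * W * h) BPhi_der) as H.
  rewrite E0, Rminus_0_r, Rminus_0_r, (Rabs_pos_eq h) in H by lra.
  assert (H' : Rabs (BPhi h) <= 6 * W * h * h).
  { apply H. intros c Hc. rewrite Rmin_left, Rmax_right in Hc by lra.
    eapply Rle_trans. apply BPhi1_bd; lra. pose proof W_nonneg. apply Rmult_le_compat_l; nra. }
  rewrite Eh. unfold Rdiv. rewrite Rabs_mult, (Rabs_pos_eq (/ (h*h))) by (left; apply Rinv_0_lt_compat; nra).
  apply Rmult_le_reg_r with (h * h). nra. rewrite Rmult_assoc, Rinv_l by nra. lra.
Qed.

End Approx.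

End Smooth.

Definition ap (mu : R) (k : nat) := INR k + 2 * mu * theta k.

Lemma even_double m : Nat.even (2 * m) = true.
Proof. rewrite Nat.even_mul. reflexivity. Qed.
Lemma even_sdouble m : Nat.even (S (2 * m)) = false.
Proof. rewrite Nat.even_succ, Nat.odd_mul. reflexivity. Qed.

Lemma theta_double m : theta (2 * m) = 0.
Proof. unfold theta. rewrite even_double. reflexivity. Qed.
Lemma theta_sdouble m : theta (S (2 * m)) = 1.
Proof. unfold theta. rewrite even_sdouble. reflexivity. Qed.

Lemma theta_sub k j : (2 * j <= k)%nat -> theta (k - 2 * j) = theta k.
Proof. intros H. unfold theta. rewrite Nat.even_sub by lia. rewrite even_double. destruct (Nat.even k); reflexivity. Qed.

Section GM.
Variable mu : R.
Hypothesis Hmu : 0 <= mu.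

Let G0 := Gamma (mu + /2).
Lemma G0_pos : 0 < G0.
Proof. apply Gamma_pos. lra. Qed.

Lemma gm_even m : gamma_mu mu (2 * m) = 2 ^ (2 * m) * INR (fact m) * Gamma (INR m + mu + /2) / G0.
Proof. unfold gamma_mu. rewrite even_double, Nat.div2_double. reflexivity. Qed.
Lemma gm_odd m : gamma_mu mu (S (2 * m)) = 2 ^ (2 * m + 1) * INR (fact m) * Gamma (INR m + mu + 3/2) / G0.
Proof. unfold gamma_mu. rewrite even_sdouble, Nat.div2_succ_double. reflexivity. Qed.

Lemma gm0 : gamma_mu mu 0 = 1.
Proof.
  change 0%nat with (2 * 0)%nat. rewrite gm_even. simpl. replace (0 + mu + /2) with (mu + /2) by ring.
  fold G0. pose proof G0_pos. field. lra.
Qed.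

Lemma gmS k : gamma_mu mu (S k) = ap mu (S k) * gamma_mu mu k.
Proof.
  pose proof G0_pos.
  destruct (Nat.Even_or_Odd k) as [[m ->]|[m ->]].
  - rewrite gm_odd, gm_even. unfold ap. rewrite theta_sdouble.
    replace (INR m + mu + 3/2) with ((INR m + mu + /2) + 1) by field.
    rewrite Gamma_rec by (pose proof (pos_INR m); lra).
    rewrite S_INR, mult_INR, pow_add. simpl (INR 2). field. lra.
  - replace (S (2 * m + 1)) with (2 * S m)%nat by lia. replace (2 * m + 1)%nat with (S (2 * m)) by lia.
    rewrite gm_odd, gm_even. unfold ap. rewrite theta_double.
    replace (INR (S m) + mu + /2) with (INR m + mu + 3/2) by (rewrite S_INR; field).
    replace (2 * S m)%nat with (2 * m + 1 + 1)%nat by lia.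
    rewrite (pow_add 2 (2 * m + 1) 1).
    replace (fact (S m)) with (S m * fact m)%nat by reflexivity.
    rewrite !plus_INR, !mult_INR, !S_INR. simpl (INR 2). simpl (INR 1). change (INR 0) with 0. field. lra.
Qed.

Lemma ap_nonneg k : 0 <= ap mu k.
Proof.
  unfold ap, theta. pose proof (pos_INR k). destruct (Nat.even k); nra.
Qed.

Lemma ap_ge k : INR k <= ap mu k.
Proof.
  unfold ap, theta. destruct (Nat.even k); nra.
Qed.

Lemma gm_pos k : 0 < gamma_mu mu k.
Proof.
  induction k. rewrite gm0; lra. rewrite gmS. apply Rmult_lt_0_compat; auto.
  pose proof (ap_ge (S k)). rewrite S_INR in H. pose proof (pos_INR k). lra.
Qed.

Lemma gm_fact k : INR (fact k) <= gamma_mu mu k.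
Proof.
  induction k. rewrite gm0; simpl; lra. rewrite gmS.
  replace (fact (S k)) with (S k * fact k)%nat by reflexivity. rewrite mult_INR.
  apply Rmult_le_compat; auto. apply pos_INR. apply pos_INR. apply ap_ge.
Qed.

Lemma ap0 : ap mu 0 = 0.
Proof. unfold ap. change 0%nat with (2 * 0)%nat. rewrite theta_double. simpl. ring. Qed.

Lemma apS k : ap mu (S k) = ap mu k + 1 + 2 * mu * (-1) ^ k.
Proof.
  unfold ap. destruct (Nat.Even_or_Odd k) as [[m ->]|[m ->]].
  - rewrite theta_sdouble, theta_double, pow_1_even, S_INR. ring.
  - replace (S (2 * m + 1)) with (2 * S m)%nat by lia. replace (2 * m + 1)%nat with (S (2 * m)) by lia.
    rewrite theta_sdouble, theta_double, pow_1_odd. replace (2 * S m)%nat with (S (S (2 * m))) by lia.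
    rewrite !S_INR. ring.
Qed.

End GM.

Ltac ringR := cbv beta; match goal with |- @eq _ ?a ?b => change (@eq R a b); ring end.
Ltac fieldR := cbv beta; match goal with |- @eq _ ?a ?b => change (@eq R a b); field end.
Lemma sR_ext (a b : nat -> R) l l' : (forall n, a n = b n) -> l = l' -> is_series a l -> is_series b l'.
Proof. intros H1 H2 H3. subst. apply (is_series_ext a b); auto. Qed.
Lemma sR_plus (a b : nat -> R) la lb : is_series a la -> is_series b lb -> is_series (fun n => a n + b n) (la + lb).
Proof. intros. apply (is_series_plus a b la lb); auto. Qed.
Lemma sR_minus (a b : nat -> R) la lb : is_series a la -> is_series b lb -> is_series (fun n => a n - b n) (la - lb).
Proof. intros. apply (is_series_minus a b la lb); auto. Qed.
Lemma sR_scal (a : nat -> R) c la : is_series a la -> is_series (fun n => c * a n) (c * la).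
Proof. intros. apply (is_series_scal c a la); auto. Qed.
Lemma sR_decr1 (a : nat -> R) l : is_series (fun k => a (S k)) (l - a 0%nat) -> is_series a l.
Proof. intros H. apply is_series_decr_1. eapply sR_ext; [| |exact H]; intros; reflexivity. Qed.
Lemma sR_ex (a : nat -> R) l : is_series a l -> ex_series a.
Proof. intros; exists l; auto. Qed.

Definition pad (a : nat -> R) (i : nat) := if Nat.even i then a (Nat.div2 i) else 0.

Lemma sum_pad_aux (a c : nat -> R) m :
  sum_f_R0 (fun i => pad a i * c i) (2 * m) = sum_f_R0 (fun j => a j * c (2 * j)%nat) m /\
  sum_f_R0 (fun i => pad a i * c i) (S (2 * m)) = sum_f_R0 (fun j => a j * c (2 * j)%nat) m.
Proof.
  induction m as [|m [IH1 IH2]].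
  - simpl. unfold pad. simpl. split; ring.
  - assert (E1 : sum_f_R0 (fun i => pad a i * c i) (2 * S m) = sum_f_R0 (fun j => a j * c (2 * j)%nat) (S m)).
    { replace (2 * S m)%nat with (S (S (2 * m))) by lia. rewrite tech5, IH2, tech5.
      unfold pad. replace (S (S (2 * m))) with (2 * S m)%nat by lia. rewrite even_double, Nat.div2_double. ring. }
    split; auto. rewrite tech5, E1. unfold pad. rewrite even_sdouble. ring.
Qed.

Lemma sum_pad (a c : nat -> R) k :
  sum_f_R0 (fun i => pad a i * c i) k = sum_f_R0 (fun j => a j * c (2 * j)%nat) (Nat.div2 k).
Proof.
  destruct (Nat.Even_or_Odd k) as [[m ->]|[m ->]].
  - rewrite Nat.div2_double. apply sum_pad_aux.
  - replace (2 * m + 1)%nat with (S (2 * m)) by lia. rewrite Nat.div2_succ_double. apply sum_pad_aux.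
Qed.

Lemma sum_n_pad (a : nat -> R) k : sum_n (pad a) k = sum_n a (Nat.div2 k).
Proof.
  rewrite !sum_n_Reals.
  rewrite <- (sum_eq (fun i => pad a i * 1)) by (intros; ring).
  rewrite sum_pad. apply sum_eq. intros; ring.
Qed.

Lemma div2_ev : filterlim Nat.div2 Hierarchy.eventually Hierarchy.eventually.
Proof.
  intros P [N HN]. exists (2 * N)%nat. intros n Hn. apply HN.
  pose proof (Nat.div2_odd n). destruct (Nat.odd n); simpl in H; lia.
Qed.

Lemma is_series_pad (a : nat -> R) l : is_series a l -> is_series (pad a) l.
Proof.
  intros H. unfold is_series.
  apply (filterlim_ext (fun k => sum_n a (Nat.div2 k))).
  intros; symmetry; apply sum_n_pad.
  apply (filterlim_comp _ _ _ Nat.div2 (sum_n a) _ Hierarchy.eventually); auto. apply div2_ev.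
Qed.

Definition CPs (a b : nat -> R) (k : nat) := sum_f_R0 (fun j => a j * b (k - 2 * j)%nat) (Nat.div2 k).

Lemma CP (a b : nat -> R) la lb : (forall n, 0 <= a n) -> (forall n, 0 <= b n) ->
  is_series a la -> is_series b lb -> is_series (CPs a b) (la * lb).
Proof.
  intros Ha Hb Sa Sb.
  pose proof (is_series_mult_pos (pad a) b la lb (is_series_pad a la Sa) Sb) as H.
  eapply sR_ext; [| |apply H]. intros k. unfold CPs. apply (sum_pad a (fun i => b (k - i)%nat)).
  reflexivity. intros; unfold pad; destruct (Nat.even n); auto; lra. auto.
Qed.

Lemma CPs_nonneg (a b : nat -> R) k : (forall n, 0 <= a n) -> (forall n, 0 <= b n) -> 0 <= CPs a b k.
Proof. intros. unfold CPs. apply cond_pos_sum. intros; apply Rmult_le_pos; auto. Qed.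

Lemma exp_series y : is_series (fun j => y ^ j / INR (fact j)) (exp y).
Proof.
  pose proof (is_exp_Reals y) as H. unfold is_pseries in H.
  eapply sR_ext; [| |exact H]. intros; unfold scal; simpl; unfold mult; simpl. rewrite pow_n_pow. unfold Rdiv; ring. auto.
Qed.

Section EMU.
Variable mu : R.
Hypothesis Hmu : 0 <= mu.

Lemma emu_abs y : ex_series (fun m => Rabs (y ^ m / gamma_mu mu m)).
Proof.
  apply (@ex_series_le R_AbsRing R_CompleteNormedModule _ (fun m => Rabs y ^ m / INR (fact m))).
  - intros m. change (norm (Rabs (y ^ m / gamma_mu mu m))) with (Rabs (Rabs (y ^ m / gamma_mu mu m))).
    rewrite Rabs_Rabsolu. unfold Rdiv. rewrite Rabs_mult, <- RPow_abs, Rabs_inv.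
    pose proof (gm_pos mu Hmu m). rewrite (Rabs_pos_eq (gamma_mu mu m)) by lra.
    apply Rmult_le_compat_l. apply pow_le, Rabs_pos.
    apply Rinv_le_contravar. apply INR_fact_lt_0. apply gm_fact; auto.
  - eexists. apply exp_series.
Qed.

Lemma emu_series y : is_series (fun m => y ^ m / gamma_mu mu m) (e_mu mu y).
Proof. unfold e_mu. apply Series_correct. apply ex_series_Rabs. apply emu_abs. Qed.

End EMU.

Section Moments.
Variables alpha mu N x : R.
Hypothesis Ha : 0 <= alpha.
Hypothesis Hmu : 0 <= mu.
Hypothesis HN : 0 < N.
Hypothesis Hx : 0 <= x.

Definition yy := alpha * x ^ 2.
Definition A (j : nat) := yy ^ j / INR (fact j).
Definition B (m : nat) := (N * x) ^ m / gamma_mu mu m.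
Definition EE := e_mu mu (N * x).
Definition w (k : nat) := h_mu mu k N alpha / gamma_mu mu k * x ^ k.
Definition p (k : nat) := (INR k + 2 * mu * theta k) / N.

Lemma yy_nonneg : 0 <= yy.
Proof. unfold yy. apply Rmult_le_pos; auto. apply pow_le; auto. Qed.
Lemma A_nonneg j : 0 <= A j.
Proof. unfold A. apply Rmult_le_pos. apply pow_le, yy_nonneg. left; apply Rinv_0_lt_compat, INR_fact_lt_0. Qed.
Lemma B_nonneg m : 0 <= B m.
Proof. unfold B. apply Rmult_le_pos. apply pow_le. nra. left; apply Rinv_0_lt_compat, gm_pos; auto. Qed.

Lemma A_succ k : INR (S k) * A (S k) = yy * A k.
Proof.
  unfold A. replace (fact (S k)) with (S k * fact k)%nat by reflexivity. rewrite mult_INR. simpl pow.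
  pose proof (INR_fact_lt_0 k). pose proof (pos_INR k). rewrite S_INR. field. lra.
Qed.

Lemma sA0 : is_series A (exp yy).
Proof. apply exp_series. Qed.

Lemma sA1 : is_series (fun j => INR j * A j) (yy * exp yy).
Proof.
  apply sR_decr1. eapply sR_ext; [| |apply (sR_scal _ yy _ sA0)].
  intros; simpl; rewrite <- A_succ; reflexivity. simpl; ring.
Qed.

Lemma sA2 : is_series (fun j => INR j * INR j * A j) (yy * (yy + 1) * exp yy).
Proof.
  apply sR_decr1. eapply sR_ext; [| |apply (sR_plus _ _ _ _ (sR_scal _ yy _ sA1) (sR_scal _ yy _ sA0))].
  intros k. rewrite (Rmult_assoc (INR (S k))), A_succ, S_INR. ring. simpl; ring.
Qed.

Lemma B_succ m : ap mu (S m) * B (S m) = N * x * B m.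
Proof.
  unfold B. rewrite gmS by auto. pose proof (gm_pos mu Hmu m).
  assert (0 < ap mu (S m)) by (pose proof (ap_ge mu Hmu (S m)); rewrite S_INR in H0; pose proof (pos_INR m); lra).
  simpl pow. field. lra.
Qed.

Lemma sB0 : is_series B EE.
Proof. apply emu_series; auto. Qed.

Lemma sB1 : is_series (fun m => ap mu m * B m) (N * x * EE).
Proof.
  apply sR_decr1. eapply sR_ext; [| |apply (sR_scal _ (N * x) _ sB0)].
  intros; rewrite B_succ; reflexivity. rewrite ap0; lra.
Qed.

Lemma sBm : is_series (fun m => (-1) ^ m * B m) (e_mu mu (- (N * x))).
Proof.
  eapply sR_ext; [| |apply emu_series; auto]. intros m. unfold B.
  replace ((- (N * x)) ^ m) with ((-1) ^ m * (N * x) ^ m) by (rewrite <- Rpow_mult_distr; f_equal; ring). unfold Rdiv; apply Rmult_assoc. reflexivity. auto.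
Qed.

Lemma sB2 : is_series (fun m => ap mu m * ap mu m * B m) (N * x * (N * x * EE + EE + 2 * mu * e_mu mu (- (N * x)))).
Proof.
  apply sR_decr1.
  eapply sR_ext; [| |apply (sR_scal _ (N * x) _ (sR_plus _ _ _ _ (sR_plus _ _ _ _ sB1 sB0) (sR_scal _ (2 * mu) _ sBm)))].
  intros m. rewrite Rmult_assoc, B_succ, apS. ringR. rewrite ap0; ringR.
Qed.

Lemma j_le k j : (j <= Nat.div2 k)%nat -> (2 * j <= k)%nat.
Proof. intros H. pose proof (Nat.div2_odd k). destruct (Nat.odd k); simpl in H0; lia. Qed.

Lemma w_eq k : w k = CPs A B k.
Proof.
  unfold w, h_mu, CPs. pose proof (gm_pos mu Hmu k).
  replace (gamma_mu mu k * sum_f_R0 (fun j => alpha ^ j * N ^ (k - 2 * j) / (INR (fact j) * gamma_mu mu (k - 2 * j))) (Nat.div2 k) / gamma_mu mu k * x ^ k)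
    with (x ^ k * sum_f_R0 (fun j => alpha ^ j * N ^ (k - 2 * j) / (INR (fact j) * gamma_mu mu (k - 2 * j))) (Nat.div2 k)) by (field; lra).
  rewrite scal_sum. apply sum_eq. intros j Hj. pose proof (j_le k j Hj).
  assert (Ek : x ^ k = x ^ (2 * j) * x ^ (k - 2 * j)) by (rewrite <- pow_add; f_equal; lia).
  unfold A, B, yy. rewrite Ek.
  rewrite !Rpow_mult_distr. rewrite <- pow_mult.
  pose proof (INR_fact_lt_0 j). pose proof (gm_pos mu Hmu (k - 2 * j)).
  field. lra.
Qed.

Lemma node_eq k j : (j <= Nat.div2 k)%nat -> INR k + 2 * mu * theta k = 2 * INR j + ap mu (k - 2 * j).
Proof.
  intros Hj. pose proof (j_le k j Hj). unfold ap. rewrite theta_sub by auto.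
  rewrite minus_INR by auto. rewrite mult_INR. simpl (INR 2). ring.
Qed.

Lemma w_nonneg k : 0 <= w k.
Proof. rewrite w_eq. apply CPs_nonneg. apply A_nonneg. apply B_nonneg. Qed.

Lemma p_nonneg k : 0 <= p k.
Proof. unfold p. apply Rmult_le_pos. pose proof (ap_nonneg mu Hmu k). exact H. left; apply Rinv_0_lt_compat; auto. Qed.

Lemma M0 : is_series w (exp yy * EE).
Proof.
  eapply sR_ext; [| |apply (CP A B _ _ A_nonneg B_nonneg sA0 sB0)]. intros; symmetry; apply w_eq. reflexivity.
Qed.

Lemma M1 : is_series (fun k => w k * p k) (/ N * (2 * (yy * exp yy) * EE + exp yy * (N * x * EE))).
Proof.
  assert (S1 := CP (fun j => INR j * A j) B _ _ (fun j => Rmult_le_pos _ _ (pos_INR j) (A_nonneg j)) B_nonneg sA1 sB0).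
  assert (S2 := CP A (fun m => ap mu m * B m) _ _ A_nonneg (fun m => Rmult_le_pos _ _ (ap_nonneg mu Hmu m) (B_nonneg m)) sA0 sB1).
  eapply sR_ext; [| |apply (sR_scal _ (/ N) _ (sR_plus _ _ _ _ (sR_scal _ 2 _ S1) S2))].
  2: ringR.
  intros k. rewrite w_eq. unfold CPs.
  rewrite scal_sum, <- sum_plus, scal_sum, Rmult_comm, scal_sum. apply sum_eq. intros j Hj.
  unfold p. rewrite (node_eq k j Hj). field. lra.
Qed.

Lemma M2 : is_series (fun k => w k * (p k * p k))
  (/ N * / N * (4 * (yy * (yy + 1) * exp yy) * EE + 4 * (yy * exp yy) * (N * x * EE)
     + exp yy * (N * x * (N * x * EE + EE + 2 * mu * e_mu mu (- (N * x)))))).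
Proof.
  assert (S1 := CP (fun j => INR j * INR j * A j) B _ _ (fun j => Rmult_le_pos _ _ (Rmult_le_pos _ _ (pos_INR j) (pos_INR j)) (A_nonneg j)) B_nonneg sA2 sB0).
  assert (S2 := CP (fun j => INR j * A j) (fun m => ap mu m * B m) _ _ (fun j => Rmult_le_pos _ _ (pos_INR j) (A_nonneg j)) (fun m => Rmult_le_pos _ _ (ap_nonneg mu Hmu m) (B_nonneg m)) sA1 sB1).
  assert (S3 := CP A (fun m => ap mu m * ap mu m * B m) _ _ A_nonneg (fun m => Rmult_le_pos _ _ (Rmult_le_pos _ _ (ap_nonneg mu Hmu m) (ap_nonneg mu Hmu m)) (B_nonneg m)) sA0 sB2).
  eapply sR_ext; [| |apply (sR_scal _ (/ N * / N) _ (sR_plus _ _ _ _ (sR_plus _ _ _ _ (sR_scal _ 4 _ S1) (sR_scal _ 4 _ S2)) S3))].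
  2: ringR.
  intros k. rewrite w_eq. unfold CPs. set (n := Nat.div2 k).
  rewrite (scal_sum (fun j => INR j * INR j * A j * B (k - 2 * j)%nat) n 4).
  rewrite (scal_sum (fun j => INR j * A j * (ap mu (k - 2 * j) * B (k - 2 * j)%nat)) n 4).
  rewrite <- !sum_plus. rewrite scal_sum. rewrite (Rmult_comm (sum_f_R0 _ n)), scal_sum.
  apply sum_eq. intros j Hj.
  unfold p. rewrite (node_eq k j Hj). field. lra.
Qed.

Lemma w0 : w 0 = 1.
Proof. rewrite w_eq. unfold CPs, A, B. simpl. rewrite gm0 by auto. field. Qed.
Lemma p0 : p 0 = 0.
Proof. unfold p. change 0%nat with (2 * 0)%nat. rewrite theta_double. simpl. field. lra. Qed.

End Moments.

Lemma lub_ge (E : R -> Prop) v B : E v -> (forall u, E u -> u <= B) -> v <= real (Lub_Rbar E).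
Proof.
  intros Hv HB. destruct (Lub_Rbar_correct E) as [Hub Hl].
  assert (H1 := Hub v Hv). assert (H2 : Rbar_le (Lub_Rbar E) (Finite B)) by (apply Hl; intros u Hu; apply HB; auto).
  destruct (Lub_Rbar E); simpl in *; tauto.
Qed.

Lemma lub_le (E : R -> Prop) B : 0 <= B -> (forall u, E u -> u <= B) -> real (Lub_Rbar E) <= B.
Proof.
  intros H0 HB. destruct (Lub_Rbar_correct E) as [Hub Hl].
  assert (H2 : Rbar_le (Lub_Rbar E) (Finite B)) by (apply Hl; intros u Hu; apply HB; auto).
  destruct (Lub_Rbar E); simpl in *; tauto || lra.
Qed.

Lemma lub_nonneg (E : R -> Prop) : (forall u, E u -> 0 <= u) -> 0 <= real (Lub_Rbar E).
Proof.
  intros H. destruct (Lub_Rbar_correct E) as [Hub Hl].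
  destruct (classic (exists v, E v)) as [[v Hv]|Hn].
  - assert (H1 := Hub v Hv). pose proof (H v Hv). destruct (Lub_Rbar E); simpl in *; lra.
  - assert (H2 : Rbar_le (Lub_Rbar E) m_infty) by (apply Hl; intros u Hu; exfalso; apply Hn; eauto).
    destruct (Lub_Rbar E); simpl in *; try tauto; lra.
Qed.

Section OM.
Variable g : R -> R.
Hypothesis Hg : CB g.

Lemma CB_bound : exists Bg, 0 <= Bg /\ forall t, 0 <= t -> Rabs (g t) <= Bg.
Proof.
  destruct Hg as [[Bg HB] _]. exists (Rmax 0 Bg). split. apply Rmax_l.
  intros t Ht. eapply Rle_trans. apply HB; auto. apply Rmax_r.
Qed.

Lemma omega_bound s t d : 0 <= s -> 0 <= t -> Rabs (s - t) <= d -> Rabs (g s - g t) <= omega g d.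
Proof.
  intros Hs Ht Hd. destruct CB_bound as [Bg [HB0 HB]].
  unfold omega. apply (lub_ge _ _ (2 * Bg)).
  exists s, t; auto.
  intros u [s' [t' [H1 [H2 [H3 ->]]]]]. eapply Rle_trans. apply Rabs_triang. rewrite Rabs_Ropp.
  pose proof (HB s' H1). pose proof (HB t' H2). lra.
Qed.

Lemma omega_nonneg d : 0 <= omega g d.
Proof. unfold omega. apply lub_nonneg. intros u [s' [t' [H1 [H2 [H3 ->]]]]]. apply Rabs_pos. Qed.

Lemma inner_le s Bg : 0 <= Bg -> (forall t, 0 <= t -> Rabs (g t) <= Bg) -> 0 < s ->
  real (Lub_Rbar (fun w => exists y, 0 <= y /\ w = Rabs (g (y + 2 * s) - 2 * g (y + s) + g y))) <= 4 * Bg.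
Proof.
  intros HB0 HB Hs. apply lub_le. lra. intros u [y [Hy ->]].
  pose proof (HB (y + 2 * s) ltac:(lra)). pose proof (HB (y + s) ltac:(lra)). pose proof (HB y Hy).
  eapply Rle_trans. apply Rabs_triang. eapply Rle_trans. apply Rplus_le_compat_r. apply Rabs_triang.
  rewrite Rabs_Ropp, Rabs_mult, (Rabs_pos_eq 2) by lra. lra.
Qed.

Lemma omega2_bound y s d : 0 <= y -> 0 < s <= d -> Rabs (D2 g y s) <= omega2 g d.
Proof.
  intros Hy Hs. destruct CB_bound as [Bg [HB0 HB]].
  unfold omega2. eapply Rle_trans.
  2:{ apply (lub_ge _ _ (4 * Bg)). exists s; split; [lra| split; [lra| reflexivity]].
      intros u [s' [H1 [H2 ->]]]. apply inner_le; auto. }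
  apply (lub_ge _ _ (4 * Bg)). exists y; split; auto.
  intros u [y' [Hy' ->]].
  pose proof (HB (y' + 2 * s) ltac:(lra)). pose proof (HB (y' + s) ltac:(lra)). pose proof (HB y' Hy').
  eapply Rle_trans. apply Rabs_triang. eapply Rle_trans. apply Rplus_le_compat_r. apply Rabs_triang.
  rewrite Rabs_Ropp, Rabs_mult, (Rabs_pos_eq 2) by lra. lra.
Qed.

Lemma omega2_nonneg d : 0 <= omega2 g d.
Proof.
  unfold omega2. apply lub_nonneg. intros u [s [H1 [H2 ->]]]. apply lub_nonneg.
  intros v [y [_ ->]]. apply Rabs_pos.
Qed.

Definition gtil (t : R) := g (Rmax 0 t).

Lemma gt_cont y : continuous gtil y.
Proof.
  destruct Hg as [_ Hu]. apply filterlim_locally. intros eps.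
  destruct (Hu eps (cond_pos eps)) as [d [Hd Hdd]].
  exists (mkposreal d Hd). intros z Hz.
  unfold ball in Hz |- *; simpl in Hz |- *; unfold AbsRing_ball, abs, minus, plus, opp in Hz |- *; simpl in Hz |- *.
  unfold gtil. apply Hdd. apply Rmax_l. apply Rmax_l.
  eapply Rle_lt_trans; [|exact Hz].
  unfold Rmax; repeat destruct Rle_dec; unfold Rabs; repeat destruct Rcase_abs; lra.
Qed.

Lemma gt_eq t : 0 <= t -> gtil t = g t.
Proof. intros. unfold gtil. rewrite Rmax_right; auto. Qed.

End OM.

Lemma series_zero_mul (a : nat -> R) : Series (fun n => 0 * a n) = 0.
Proof. rewrite Series_scal_l. ring. Qed.

Lemma first_le (a : nat -> R) (l : R) : (forall n, 0 <= a n) -> is_series a l -> a 0%nat <= l.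
Proof.
  intros Ha H. assert (H' : is_series (fun k => a (S k)) (l - a 0%nat)).
  { apply is_series_incr_1. eapply sR_ext; [| |exact H]; intros; auto. unfold plus; simpl; ring. }
  apply is_series_unique in H'.
  assert (Series (fun n => 0 * a (S n)) <= Series (fun k => a (S k))).
  { apply Series_le. intros; split; [lra| rewrite Rmult_0_l; auto]. exists (l - a 0%nat).
    apply is_series_incr_1. eapply sR_ext; [| |exact H]; intros; auto. unfold plus; simpl; ring. }
  rewrite series_zero_mul in H0. lra.
Qed.

Section PF.
Variables (w p : nat -> R) (S0 S1 S2 : R).
Hypothesis Hw : forall k, 0 <= w k.
Hypothesis HS0 : is_series w S0.
Hypothesis HS1 : is_series (fun k => w k * p k) S1.
Hypothesis HS2 : is_series (fun k => w k * (p k * p k)) S2.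
Hypothesis Hp : forall k, 0 <= p k.

Lemma pf_gen (f b : nat -> R) (lb : R) : (forall k, Rabs (w k * f k) <= b k) -> is_series b lb ->
  ex_series (fun k => w k * f k) /\ Rabs (Series (fun k => w k * f k)) <= lb.
Proof.
  intros Hb Sb.
  assert (Ea : ex_series (fun k => Rabs (w k * f k))).
  { apply (@ex_series_le R_AbsRing R_CompleteNormedModule _ b). intros k.
    change (norm (Rabs (w k * f k))) with (Rabs (Rabs (w k * f k))). rewrite Rabs_Rabsolu. auto. exists lb; auto. }
  split. apply ex_series_Rabs; auto.
  eapply Rle_trans. apply Series_Rabs; auto.
  rewrite <- (is_series_unique b lb Sb). apply Series_le. intros; split; [apply Rabs_pos| auto]. exists lb; auto.
Qed.

Lemma pf_const (f : R -> R) C : (forall t, 0 <= t -> Rabs (f t) <= C) ->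
  ex_series (fun k => w k * f (p k)) /\ Rabs (Series (fun k => w k * f (p k))) <= C * S0.
Proof.
  intros Hf. apply (pf_gen (fun k => f (p k)) (fun k => C * w k)).
  intros k. rewrite Rabs_mult, (Rabs_pos_eq (w k)) by auto. rewrite Rmult_comm. apply Rmult_le_compat_r; auto.
  apply sR_scal; auto.
Qed.

Lemma pf_quad (f : R -> R) K x : (forall t, 0 <= t -> Rabs (f t) <= K * ((t - x) * (t - x))) ->
  ex_series (fun k => w k * f (p k)) /\ Rabs (Series (fun k => w k * f (p k))) <= K * (S2 - 2 * x * S1 + x * x * S0).
Proof.
  intros Hf. apply (pf_gen (fun k => f (p k)) (fun k => K * (w k * (p k * p k)) - (2 * x * K) * (w k * p k) + (K * x * x) * w k)).
  intros k. rewrite Rabs_mult, (Rabs_pos_eq (w k)) by auto.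
  replace (K * (w k * (p k * p k)) - 2 * x * K * (w k * p k) + K * x * x * w k) with (w k * (K * ((p k - x) * (p k - x)))) by ring.
  apply Rmult_le_compat_l; auto.
  eapply sR_ext; [| |apply (sR_plus _ _ _ _ (sR_minus _ _ _ _ (sR_scal _ K _ HS2) (sR_scal _ (2 * x * K) _ HS1)) (sR_scal _ (K * x * x) _ HS0))]. intros; reflexivity. ringR.
Qed.

End PF.

Lemma x0_series (w : nat -> R) (pp : nat -> R) (f : R -> R) :
  w 0%nat = 1 -> (forall k, w (S k) = 0) -> is_series (fun k => w k * f (pp k)) (f (pp 0%nat)).
Proof.
  intros H0 HS. apply sR_decr1.
  eapply sR_ext; [| |apply (sR_scal _ 0 _ (exp_series 0))].
  intros k. rewrite HS. ringR. rewrite H0. ringR.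
Qed.

Theorem theorem10 (alpha mu : R) (Halpha : 0 <= alpha) (Hmu : 0 <= mu) :
  exists M : R, 0 < M /\
    forall (g : R -> R) (n : nat) (x : R),
      CB g -> (1 <= n)%nat -> 0 <= x ->
      Rabs (T_op alpha mu n g x - g x) <=
        M * omega2 g (/ 2 * sqrt (/ (INR n) ^ 2 * x *
                                    (8 * x ^ 3 * alpha ^ 2 + 4 * x * alpha + INR n)
                                  + 2 * mu * x / INR n
                                    * (e_mu mu (- (INR n * x)) / e_mu mu (INR n * x))))
        + omega g (2 * alpha * x ^ 2 / INR n).
Proof.
  exists 48. split. lra.
  intros g n x Hg Hn Hx.
  set (N := INR n).
  assert (HN : 0 < N) by (apply lt_0_INR; lia).
  set (ww := w alpha mu N x). set (pp := p mu N).
  assert (Hww : forall k, 0 <= ww k) by (apply w_nonneg; auto).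
  assert (Hpp : forall k, 0 <= pp k) by (apply p_nonneg; auto).
  assert (HT : T_op alpha mu n g x = / (exp (yy alpha x) * EE mu N x) * Series (fun k => ww k * g (pp k))) by reflexivity.
  pose proof (M0 alpha mu N x Halpha Hmu HN Hx) as HS0. fold ww in HS0.
  set (S0 := exp (yy alpha x) * EE mu N x) in *.
  assert (HS0pos : 0 < S0).
  { pose proof (first_le ww S0 Hww HS0). unfold ww in H. rewrite w0 in H by auto. lra. }
  pose proof (omega2_nonneg g (/ 2 * sqrt (/ N ^ 2 * x * (8 * x ^ 3 * alpha ^ 2 + 4 * x * alpha + N) + 2 * mu * x / N * (e_mu mu (- (N * x)) / e_mu mu (N * x))))) as Hom2.
  pose proof (omega_nonneg g (2 * alpha * x ^ 2 / N)) as Hom.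
  destruct (Req_dec x 0) as [Hx0|Hx0].
  -
    assert (Hw0 : ww 0%nat = 1) by (unfold ww; apply w0; auto).
    assert (HwS : forall k, ww (S k) = 0).
    { intros k. unfold ww, w. rewrite Hx0. simpl. ring. }
    pose proof (x0_series ww pp g Hw0 HwS) as Hg0.
    pose proof (x0_series ww pp (fun _ => 1) Hw0 HwS) as H1.
    assert (E1 : S0 = 1).
    { rewrite <- (is_series_unique ww S0 HS0). apply is_series_unique. eapply sR_ext; [| |exact H1]; intros; simpl; ringR. }
    rewrite HT. fold S0. rewrite E1. rewrite (is_series_unique _ _ Hg0).
    unfold pp. rewrite p0 by auto. rewrite Hx0.
    replace (/ 1 * g 0 - g 0) with 0 by field. rewrite Rabs_R0.
    rewrite Hx0 in Hom2, Hom. fold N. lra.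
  -
    assert (Hxp : 0 < x) by lra.
    pose proof (M1 alpha mu N x Halpha Hmu HN Hx) as HS1. fold ww pp in HS1.
    pose proof (M2 alpha mu N x Halpha Hmu HN Hx) as HS2. fold ww pp in HS2.
    set (S1v := / N * (2 * (yy alpha x * exp (yy alpha x)) * EE mu N x + exp (yy alpha x) * (N * x * EE mu N x))) in HS1.
    set (S2v := / N * / N * (4 * (yy alpha x * (yy alpha x + 1) * exp (yy alpha x)) * EE mu N x +
        4 * (yy alpha x * exp (yy alpha x)) * (N * x * EE mu N x) +
        exp (yy alpha x) * (N * x * (N * x * EE mu N x + EE mu N x + 2 * mu * e_mu mu (- (N * x)))))) in HS2.
    assert (HEE : 0 < EE mu N x).
    { pose proof (exp_pos (yy alpha x)). unfold S0 in HS0pos.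
      destruct (Rlt_le_dec 0 (EE mu N x)); auto. nra. }
    set (beta := 2 * alpha * x ^ 2 / N) in *.
    assert (Hbeta : 0 <= beta) by (unfold beta; apply Rmult_le_pos; [apply Rmult_le_pos; [lra| apply pow_le; lra]| left; apply Rinv_0_lt_compat; lra]).
    set (T2 := (S2v - 2 * x * S1v + x * x * S0) / S0).
    assert (HS1v : S1v = S0 * (x + beta)).
    { unfold S1v, S0, beta, yy. field. lra. }
    assert (Hstuff : / N ^ 2 * x * (8 * x ^ 3 * alpha ^ 2 + 4 * x * alpha + N) + 2 * mu * x / N * (e_mu mu (- (N * x)) / e_mu mu (N * x)) = T2 + beta * beta).
    { unfold T2, S2v, S1v, S0, beta, yy. unfold EE in *. pose proof (exp_pos (alpha * x ^ 2)). field. split; lra. }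
    assert (HQ : is_series (fun k => ww k * ((pp k - x) * (pp k - x))) (S2v - 2 * x * S1v + x * x * S0)).
    { eapply sR_ext; [| |apply (sR_plus _ _ _ _ (sR_minus _ _ _ _ HS2 (sR_scal _ (2 * x) _ HS1)) (sR_scal _ (x * x) _ HS0))].
      intros; ringR. reflexivity. }
    assert (HT2 : x * x <= T2 * S0).
    { pose proof (first_le _ _ (fun k => Rmult_le_pos _ _ (Hww k) (Rle_0_sqr (pp k - x))) HQ) as H.
      simpl in H. unfold ww, pp in H. rewrite w0, p0 in H by auto. unfold T2, Rsqr in *. replace ((S2v - 2 * x * S1v + x * x * S0) / S0 * S0) with (S2v - 2 * x * S1v + x * x * S0) by (field; lra). nra. }
    set (V := T2 + beta * beta) in *.
    assert (HV : 0 < V).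
    { assert (0 < T2). { apply Rmult_lt_reg_r with S0; auto. nra. } unfold V. nra. }
    rewrite Hstuff.
    set (h := / 2 * sqrt V).
    assert (Hh : 0 < h) by (unfold h; pose proof (sqrt_lt_R0 V HV); lra).
    assert (Hhh : h * h = V / 4) by (unfold h; replace (/2 * sqrt V * (/2 * sqrt V)) with (sqrt V * sqrt V / 4) by field; rewrite sqrt_sqrt by lra; reflexivity).
    set (W := omega2 g h) in *.
    assert (HW : forall y s, 0 <= y -> 0 < s <= h -> Rabs (D2 (gtil g) y s) <= W).
    { intros y s Hy Hs. unfold D2. rewrite !gt_eq by lra. apply (omega2_bound g Hg y s h Hy Hs). }
    assert (HW0 : 0 <= W) by (unfold W; apply omega2_nonneg).
    set (phi0 := phi (gtil g) h). set (phi01 := phi1 (gtil g) h).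
    assert (Happ : forall t, 0 <= t -> Rabs (phi0 t - g t) <= 6 * W).
    { intros t Ht. rewrite <- (gt_eq g t Ht). apply (approx_bound (gtil g) (gt_cont g Hg) h W Hh HW t Ht). }
    set (K := 9 * W / (h * h)).
    set (psi := fun t => phi0 t - phi0 x - phi01 x * (t - x)).
    assert (Hpsi : forall t, 0 <= t -> Rabs (psi t) <= K * ((t - x) * (t - x))).
    { intros t Ht. apply (taylor_bound (gtil g) (gt_cont g Hg) h W Hh HW x t Hx Ht). }
    set (f1 := fun t => g t - phi0 t).
    assert (Hf1 : forall t, 0 <= t -> Rabs (f1 t) <= 6 * W).
    { intros t Ht. unfold f1. rewrite Rabs_minus_sym. auto. }
    destruct (pf_const ww pp S0 Hww HS0 Hpp f1 (6 * W) Hf1) as [Ex1 Bd1].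
    destruct (pf_quad ww pp S0 S1v S2v Hww HS0 HS1 HS2 Hpp psi K x Hpsi) as [Ex2 Bd2].
    set (Sa := Series (fun k => ww k * f1 (pp k))) in *.
    set (Sb := Series (fun k => ww k * psi (pp k))) in *.
    assert (Hdec : Series (fun k => ww k * g (pp k)) = Sa + Sb + phi0 x * S0 + phi01 x * (S1v - x * S0)).
    { apply is_series_unique.
      eapply sR_ext; [| |apply (sR_plus _ _ _ _ (sR_plus _ _ _ _ (sR_plus _ _ _ _ (Series_correct _ Ex1) (Series_correct _ Ex2)) (sR_scal _ (phi0 x) _ HS0)) (sR_scal _ (phi01 x) _ (sR_minus _ _ _ _ HS1 (sR_scal _ x _ HS0))))].
      intros k. unfold f1, psi. ringR. reflexivity. }
    rewrite HT. fold S0. rewrite Hdec. rewrite HS1v.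
    replace (/ S0 * (Sa + Sb + phi0 x * S0 + phi01 x * (S0 * (x + beta) - x * S0)) - g x)
      with (Sa / S0 + Sb / S0 + ((phi0 (x + beta) - g (x + beta)) - psi (x + beta) + (g (x + beta) - g x)))
      by (unfold psi; field; lra).
    assert (B1 : Rabs (Sa / S0) <= 6 * W).
    { unfold Rdiv. rewrite Rabs_mult, (Rabs_pos_eq (/ S0)) by (left; apply Rinv_0_lt_compat; auto).
      apply Rmult_le_reg_r with S0; auto. rewrite Rmult_assoc, Rinv_l by lra. lra. }
    assert (B2 : Rabs (Sb / S0) <= K * T2).
    { unfold Rdiv. rewrite Rabs_mult, (Rabs_pos_eq (/ S0)) by (left; apply Rinv_0_lt_compat; auto).
      apply Rmult_le_reg_r with S0; auto. rewrite Rmult_assoc, Rinv_l by lra.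
      unfold T2. replace (K * ((S2v - 2 * x * S1v + x * x * S0) / S0) * S0) with (K * (S2v - 2 * x * S1v + x * x * S0)) by (field; lra). lra. }
    assert (B3 : Rabs (phi0 (x + beta) - g (x + beta)) <= 6 * W) by (apply Happ; lra).
    assert (B4 : Rabs (psi (x + beta)) <= K * (beta * beta)).
    { replace (beta * beta) with ((x + beta - x) * (x + beta - x)) by ring. apply Hpsi; lra. }
    assert (B5 : Rabs (g (x + beta) - g x) <= omega g beta).
    { apply omega_bound; auto; try lra. replace (x + beta - x) with beta by ring. rewrite Rabs_pos_eq; lra. }
    assert (KV : K * V = 36 * W).
    { unfold K. rewrite Hhh. field. lra. }
    assert (Htri : forall a b c d e : R, Rabs (a + b + (c - d + e)) <= Rabs a + Rabs b + Rabs c + Rabs d + Rabs e).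
    { intros. unfold Rminus. eapply Rle_trans. apply Rabs_triang. eapply Rle_trans. apply Rplus_le_compat_r. apply Rabs_triang.
      eapply Rle_trans. apply Rplus_le_compat_l. apply Rabs_triang.
      eapply Rle_trans. apply Rplus_le_compat_l. apply Rplus_le_compat_r. apply Rabs_triang.
      rewrite Rabs_Ropp. lra. }
    eapply Rle_trans. apply Htri.
    unfold V in KV. fold N. lra.
Qed.
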